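(* Let $\mathcal A_1,\mathcal B_1:U_1\to V_1$ be linear maps of finite-dimensional vector spaces over a field $\mathbb F$ with $\mathcal B_1$ surjective. Let $U_2=\mathcal B_1^{-1}(\operatorname{im}\mathcal A_1)$, $V_2=\operatorname{im}\mathcal A_1$, and let $\mathcal A_2,\mathcal B_2:U_2\to V_2$ be the restrictions of $\mathcal A_1,\mathcal B_1$; similarly let $V_3=\operatorname{im}\mathcal A_2$. Let $(A_1,B_1)$ and $(A_2,B_2)$ be the matrix pairs of $(\mathcal A_1,\mathcal B_1)$ and $(\mathcal A_2,\mathcal B_2)$ in arbitrary bases, and take any regularizing decomposition of $(A_1,B_1)$. Then a regularizing decomposition of $(A_2,B_2)$ is obtained from it by deleting all summands $(J_1(0),I_1)=([0],[1])$, replacing each summand $(J_k(0),I_k)$ with $k\ge2$ by $(J_{k-1}(0),I_{k-1})$, and leaving all other summands unchanged. The number of summands $(J_1(0),I_1)$ in the decomposition of $(A_1,B_1)$ equals $\dim V_1-2\dim V_2+\dim V_3$.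
   Context: $J_k(0)$ denotes the $k\times k$ nilpotent Jordan block with ones directly below the diagonal. $L_k$ and $R_k$ are the $(k-1)\times k$ matrices obtained from $I_k$ by deleting its last row, respectively its first row. Direct sums of matrix pairs are blockwise. Two matrix pairs $(A,B)$, $(A',B')$ are equivalent if $SA=A'R$, $SB=B'R$ for nonsingular $S,R$. A regularizing decomposition of a matrix pair $(A,B)$ is a direct sum $(I_r,D)\oplus(M_1,N_1)\oplus\dots\oplus(M_t,N_t)$ equivalent to $(A,B)$, in which $D$ is $r\times r$ nonsingular and each $(M_i,N_i)$ is one of $(I_k,J_k(0))$, $(J_k(0),I_k)$, $(L_k,R_k)$, $(L_k^T,R_k^T)$, $k\ge1$. *)

(* Defs.v *)
From HB Require Import structures.
From mathcomp Require Import all_boot all_order all_algebra.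
Set Implicit Arguments. Unset Strict Implicit. Unset Printing Implicit Defensive.
Import Order.TTheory GRing.Theory Num.Theory.
Local Open Scope ring_scope.

(* Matrices act on COLUMN vectors: A : 'M_(m,n) is the map x |-> A *m x
   from 'cV_n to 'cV_m. *)

Record mxpair (F : fieldType) := MxPair {
  pr_m : nat; pr_n : nat;
  pr_A : 'M[F]_(pr_m, pr_n); pr_B : 'M[F]_(pr_m, pr_n) }.

Definition pair_equiv (F : fieldType) (p q : mxpair F) : Prop :=
  exists (em : pr_m p = pr_m q) (en : pr_n p = pr_n q),
  exists (S : 'M[F]_(pr_m q)) (R : 'M[F]_(pr_n q)),
    [/\ S \in unitmx, R \in unitmx,
        S *m castmx (em, en) (pr_A p) = pr_A q *m R &
        S *m castmx (em, en) (pr_B p) = pr_B q *m R].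

Definition dsum (F : fieldType) (p q : mxpair F) : mxpair F :=
  MxPair (block_mx (pr_A p) 0 0 (pr_A q)) (block_mx (pr_B p) 0 0 (pr_B q)).

Definition Jmx (F : fieldType) (k : nat) : 'M[F]_k :=
  \matrix_(i < k, j < k) ((i == j.+1 :> nat)%:R).
Definition Lmx (F : fieldType) (k : nat) : 'M[F]_(k.-1, k) :=
  \matrix_(i < k.-1, j < k) ((i == j :> nat)%:R).
Definition Rmx (F : fieldType) (k : nat) : 'M[F]_(k.-1, k) :=
  \matrix_(i < k.-1, j < k) ((j == i.+1 :> nat)%:R).

Inductive blk :=
  | BIJ of nat
  | BJI of nat
  | BLR of nat
  | BLRT of nat.

Definition blk_size (b : blk) : nat :=
  match b with BIJ k | BJI k | BLR k | BLRT k => k end.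

Definition blk_pair (F : fieldType) (b : blk) : mxpair F :=
  match b with
  | BIJ k => MxPair (1%:M : 'M[F]_k) (Jmx F k)
  | BJI k => MxPair (Jmx F k) (1%:M : 'M[F]_k)
  | BLR k => MxPair (Lmx F k) (Rmx F k)
  | BLRT k => MxPair (Lmx F k)^T (Rmx F k)^T
  end.

Definition regpair (F : fieldType) (r : nat) (D : 'M[F]_r) (s : seq blk) : mxpair F :=
  foldl (@dsum F) (MxPair (1%:M : 'M[F]_r) D) (map (@blk_pair F) s).

Definition reg_decomp (F : fieldType) (p : mxpair F) (r : nat) (D : 'M[F]_r)
    (s : seq blk) : Prop :=
  [/\ D \in unitmx, all (fun b => 0 < blk_size b)%N s & pair_equiv p (regpair D s)].

Definition shift_blk (b : blk) : seq blk :=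
  match b with
  | BJI k => if (k <= 1)%N then [::] else [:: BJI k.-1]
  | _ => [:: b]
  end.
Definition shift_blks (s : seq blk) : seq blk := flatten (map shift_blk s).

Definition is_J1I1 (b : blk) : bool :=
  match b with BJI 1 => true | _ => false end.

(* Main.v *)
Require Import Defs.
From HB Require Import structures.
From mathcomp Require Import all_boot all_order all_algebra.
From mathcomp Require Import zify.
Import GRing.Theory Num.Theory.
Local Open Scope ring_scope.
Set Implicit Arguments. Unset Strict Implicit.



Section Aux.
Variable F : fieldType.

Lemma mx_ext m n (M N : 'M[F]_(m,n)) :
  (forall x : 'cV[F]_n, M *m x = N *m x) -> M = N.
Proof.
move=> H; apply/matrixP => i j.
have := congr1 (fun v : 'cV[F]_m => v i 0) (H (delta_mx j 0)).
by rewrite -!colE !mxE.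
Qed.

Lemma colspan m n e (A : 'M[F]_(m,n)) (Q : 'M[F]_(m,e)) :
  (forall z : 'cV[F]_n, exists y : 'cV[F]_e, A *m z = Q *m y) ->
  exists M : 'M[F]_(e,n), A = Q *m M.
Proof.
move=> H.
have [y Hy] := fin_all_exists (fun j : 'I_n => H (delta_mx j 0)).
exists (\matrix_(i, j) y j i 0); apply/matrixP => i j.
have := congr1 (fun v : 'cV[F]_m => v i 0) (Hy j).
rewrite -colE mxE => ->.
have -> : y j = (\matrix_(i, j) y j i 0) *m delta_mx j 0.
  by rewrite -colE; apply/colP => k; rewrite !mxE.
by rewrite mulmxA -colE mxE.
Qed.

Lemma cV_split n1 n2 (x : 'cV[F]_(n1+n2)) : exists x1 x2, x = col_mx x1 x2.
Proof. by exists (usubmx x), (dsubmx x); rewrite vsubmxK. Qed.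

Definition Red m n e d (A1 B1 : 'M[F]_(m,n)) (A2 B2 : 'M[F]_(e,d)) : Prop :=
 exists (P : 'M[F]_(n,d)) (Q : 'M[F]_(m,e)) (LP : 'M[F]_(d,n)) (LQ : 'M[F]_(e,m)),
 [/\ LP *m P = 1%:M, LQ *m Q = 1%:M,
  (forall x : 'cV[F]_n, (exists z : 'cV[F]_n, B1 *m x = A1 *m z) <-> (exists y : 'cV[F]_d, x = P *m y)),
  (forall v : 'cV[F]_m, (exists z : 'cV[F]_n, v = A1 *m z) <-> (exists y : 'cV[F]_e, v = Q *m y))
  & A1 *m P = Q *m A2 /\ B1 *m P = Q *m B2].

Lemma red_rinv m n (A B : 'M[F]_(m,n)) (X : 'M[F]_(n,m)) :
  A *m X = 1%:M -> Red A B A B.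
Proof.
move=> AX; exists 1%:M, 1%:M, 1%:M, 1%:M; split; rewrite ?mulmx1 ?mul1mx //.
- move=> x; split => [_|_]; first by exists x; rewrite mul1mx.
  by exists (X *m (B *m x)); rewrite mulmxA AX mul1mx.
- move=> v; split => [_|_]; first by exists v; rewrite mul1mx.
  by exists (X *m v); rewrite mulmxA AX mul1mx.
Qed.

Lemma red_dsum m n e d m' n' e' d' (A B : 'M[F]_(m,n)) (A2 B2 : 'M[F]_(e,d))
  (A' B' : 'M[F]_(m',n')) (A2' B2' : 'M[F]_(e',d')) :
  Red A B A2 B2 -> Red A' B' A2' B2' ->
  Red (block_mx A 0 0 A') (block_mx B 0 0 B') (block_mx A2 0 0 A2') (block_mx B2 0 0 B2').
Proof.
move=> [P [Q [LP [LQ [hP hQ hU hV [hA hB]]]]]].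
move=> [P' [Q' [LP' [LQ' [hP' hQ' hU' hV' [hA' hB']]]]]].
exists (block_mx P 0 0 P'), (block_mx Q 0 0 Q'), (block_mx LP 0 0 LP'), (block_mx LQ 0 0 LQ').
split.
- by rewrite mulmx_block !mulmx0 !mul0mx !addr0 !add0r hP hP' -scalar_mx_block.
- by rewrite mulmx_block !mulmx0 !mul0mx !addr0 !add0r hQ hQ' -scalar_mx_block.
- move=> x; have [x1 [x2 ->]] := cV_split x.
  rewrite !mul_block_col !mul0mx !addr0 !add0r; split.
  + case=> z; have [z1 [z2 ->]] := cV_split z.
    rewrite !mul_block_col !mul0mx !addr0 !add0r => /eq_col_mx [h1 h2].
    have [y1 ->] : exists y, x1 = P *m y by apply/hU; exists z1.
    have [y2 ->] : exists y, x2 = P' *m y by apply/hU'; exists z2.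
    by exists (col_mx y1 y2); rewrite mul_block_col !mul0mx !addr0 !add0r.
  + case=> y; have [y1 [y2 ->]] := cV_split y.
    rewrite !mul_block_col !mul0mx !addr0 !add0r => /eq_col_mx [h1 h2].
    have [z1 hz1] : exists z, B *m x1 = A *m z by apply/hU; exists y1.
    have [z2 hz2] : exists z, B' *m x2 = A' *m z by apply/hU'; exists y2.
    by exists (col_mx z1 z2); rewrite mul_block_col !mul0mx !addr0 !add0r hz1 hz2.
- move=> x; have [x1 [x2 ->]] := cV_split x; split.
  + case=> z; have [z1 [z2 ->]] := cV_split z.
    rewrite !mul_block_col !mul0mx !addr0 !add0r => /eq_col_mx [h1 h2].
    have [y1 ->] : exists y, x1 = Q *m y by apply/hV; exists z1.
    have [y2 ->] : exists y, x2 = Q' *m y by apply/hV'; exists z2.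
    by exists (col_mx y1 y2); rewrite mul_block_col !mul0mx !addr0 !add0r.
  + case=> y; have [y1 [y2 ->]] := cV_split y.
    rewrite !mul_block_col !mul0mx !addr0 !add0r => /eq_col_mx [h1 h2].
    have [z1 hz1] : exists z, x1 = A *m z by apply/hV; exists y1.
    have [z2 hz2] : exists z, x2 = A' *m z by apply/hV'; exists y2.
    by exists (col_mx z1 z2); rewrite mul_block_col !mul0mx !addr0 !add0r hz1 hz2.
- by rewrite !mulmx_block !mulmx0 !mul0mx !addr0 !add0r hA hA' hB hB'.
Qed.

Lemma red_dsum0 m n e d m' n' (A B : 'M[F]_(m,n)) (A2 B2 : 'M[F]_(e,d))
  (A' B' : 'M[F]_(m',n')) :
  Red A B A2 B2 -> A' = 0 -> (forall x : 'cV[F]_n', B' *m x = 0 -> x = 0) ->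
  Red (block_mx A 0 0 A') (block_mx B 0 0 B') A2 B2.
Proof.
move=> [P [Q [LP [LQ [hP hQ hU hV [hA hB]]]]]] -> hB'.
exists (col_mx P 0), (col_mx Q 0), (row_mx LP 0), (row_mx LQ 0).
split.
- by rewrite mul_row_col mul0mx addr0 hP.
- by rewrite mul_row_col mul0mx addr0 hQ.
- move=> x; have [x1 [x2 ->]] := cV_split x.
  rewrite !mul_block_col !mul0mx !addr0 !add0r; split.
  + case=> z; have [z1 [z2 ->]] := cV_split z.
    rewrite !mul_block_col !mul0mx !addr0 => /eq_col_mx [h1 /hB' ->].
    have [y1 ->] : exists y, x1 = P *m y by apply/hU; exists z1.
    by exists y1; rewrite mul_col_mx mul0mx.
  + case=> y; rewrite mul_col_mx mul0mx => /eq_col_mx [h1 ->].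
    have [z1 hz1] : exists z, B *m x1 = A *m z by apply/hU; exists y.
    by exists (col_mx z1 0); rewrite mul_block_col !mul0mx !mulmx0 !addr0 hz1.
- move=> x; have [x1 [x2 ->]] := cV_split x; split.
  + case=> z; have [z1 [z2 ->]] := cV_split z.
    rewrite !mul_block_col !mul0mx !addr0 => /eq_col_mx [h1 ->].
    have [y1 ->] : exists y, x1 = Q *m y by apply/hV; exists z1.
    by exists y1; rewrite mul_col_mx mul0mx.
  + case=> y; rewrite mul_col_mx mul0mx => /eq_col_mx [h1 ->].
    have [z1 hz1] : exists z, x1 = A *m z by apply/hV; exists y.
    by exists (col_mx z1 0); rewrite mul_block_col !mul0mx ?mulmx0 !addr0 hz1.
- by rewrite !mul_block_col !mul_col_mx !mul0mx !mulmx0 !addr0 hA hB.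
Qed.

End Aux.



Section Blocks.
Variable F : fieldType.

Lemma sum_delta2 K (a : nat) (f : nat -> F) :
  \sum_(l < K) ((l:nat) == a)%:R * f l = if (a < K)%N then f a else 0.
Proof.
rewrite (eq_bigr (fun l : 'I_K => if (l:nat) == a then f l else 0)); last first.
  by move=> l _; case: eqP => _; rewrite ?mul1r ?mul0r.
by rewrite -big_mkcond /= big_ord1_eq.
Qed.

Lemma LLt k : Lmx F k *m (Lmx F k)^T = 1%:M.
Proof.
apply/matrixP => i j; rewrite !mxE.
rewrite (eq_bigr (fun l : 'I_k => ((l:nat) == i)%:R * (j == l :> nat)%:R)); last first.
  by move=> l _; rewrite !mxE eq_sym.
rewrite (sum_delta2 _ _ (fun l => (j == l :> nat)%:R)).
rewrite (leq_trans (ltn_ord i) (leq_pred _)).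
by rewrite eq_sym.
Qed.


Lemma RRt k : Rmx F k *m (Rmx F k)^T = 1%:M.
Proof.
apply/matrixP => i j; rewrite !mxE.
rewrite (eq_bigr (fun l : 'I_k => ((l:nat) == i.+1)%:R * (l == j.+1 :> nat)%:R)); last first.
  by move=> l _; rewrite !mxE.
rewrite (sum_delta2 _ _ (fun l => (l == j.+1 :> nat)%:R)).
have := ltn_ord i; rewrite ltn_predRL => -> /=.
by rewrite eqSS.
Qed.

Lemma J_RtL k : Jmx F k = (Rmx F k)^T *m Lmx F k.
Proof.
apply/matrixP => i j; rewrite !mxE.
rewrite (eq_bigr (fun l : 'I_k.-1 => ((l:nat) == j)%:R * (i == j.+1 :> nat)%:R)); last first.
  move=> l _; rewrite !mxE; have [->|hne] := eqVneq (l:nat) j; first by rewrite ?eqxx ?mulr1 ?mul1r.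
  by rewrite ?(negbTE hne) ?mulr0 ?mul0r.
rewrite (sum_delta2 _ _ (fun _ => (i == j.+1 :> nat)%:R)).
case: ifP => // /negbT; rewrite -leqNgt => hj.
case: eqP => // hij; have := ltn_ord i; rewrite hij.
by rewrite -ltn_predRL ltnNge hj.
Qed.

Lemma LRt k : Lmx F k *m (Rmx F k)^T = Jmx F k.-1.
Proof.
apply/matrixP => i j; rewrite !mxE.
rewrite (eq_bigr (fun l : 'I_k => ((l:nat) == i)%:R * (i == j.+1 :> nat)%:R)); last first.
  move=> l _; rewrite !mxE; have [->|hne] := eqVneq (l:nat) i; first by rewrite ?eqxx ?mul1r.
  by rewrite ?(negbTE hne) ?mul0r.
rewrite (sum_delta2 _ _ (fun _ => (i == j.+1 :> nat)%:R)).
by rewrite (leq_trans (ltn_ord i) (leq_pred _)).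
Qed.

Lemma J01 k : (k <= 1)%N -> Jmx F k = 0.
Proof.
move=> hk; apply/matrixP => i j; rewrite !mxE.
have : (i < 1)%N := leq_trans (ltn_ord i) hk.
by case: (nat_of_ord i).
Qed.

End Blocks.



Section Can.
Variable F : fieldType.

Lemma red_BJI k : Red (Jmx F k) 1%:M (Jmx F k.-1) 1%:M.
Proof.
exists (Rmx F k)^T, (Rmx F k)^T, (Rmx F k), (Rmx F k); split.
- exact: RRt.
- exact: RRt.
- move=> x; split.
  + by case=> z; rewrite mul1mx J_RtL -mulmxA => ->; exists (Lmx F k *m z).
  + case=> y ->; exists ((Lmx F k)^T *m y).
    by rewrite mul1mx J_RtL !mulmxA -(mulmxA _ (Lmx F k)) LLt mulmx1.
- move=> v; split.
  + by case=> z; rewrite J_RtL -mulmxA => ->; exists (Lmx F k *m z).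
  + case=> y ->; exists ((Lmx F k)^T *m y).
    by rewrite J_RtL !mulmxA -(mulmxA _ (Lmx F k)) LLt mulmx1.
- by rewrite J_RtL -mulmxA LRt mulmx1 mul1mx.
Qed.

Definition noLRT (s : seq blk) := all (fun b => if b is BLRT _ then false else true) s.

Definition RedP (p q : mxpair F) := Red (pr_A p) (pr_B p) (pr_A q) (pr_B q).

Lemma red_can r (D : 'M[F]_r) s : noLRT s -> RedP (regpair D s) (regpair D (shift_blks s)).
Proof.
elim/last_ind: s => [|s b IH].
  by move=> _; apply: (@red_rinv _ _ _ _ _ 1%:M); rewrite /= mulmx1.
rewrite /noLRT all_rcons => /andP [hb /IH {}IH].
rewrite /regpair map_rcons foldl_rcons /shift_blks map_rcons flatten_rcons map_cat foldl_cat.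
rewrite -/(regpair D s) -/(shift_blks s) -/(regpair D (shift_blks s)).
case: b hb => [k|k|k|k] //= _.
- apply: red_dsum; first exact: IH.
  by apply: (@red_rinv _ _ _ _ _ 1%:M); rewrite mulmx1.
- case: ifP => hk /=.
  + apply: red_dsum0; [exact: IH | exact: J01 | by move=> x; rewrite mul1mx].
  + apply: red_dsum; first exact: IH.
    exact: red_BJI.
- apply: red_dsum; first exact: IH.
  by apply: (@red_rinv _ _ _ _ _ (Lmx F k)^T); rewrite LLt.
Qed.

End Can.



Section Inv.
Variable F : fieldType.

Lemma transport m n e d e' d' (A B A' B' : 'M[F]_(m,n)) (S : 'M[F]_m) (R : 'M[F]_n)
  (P : 'M[F]_(n,d)) (Q : 'M[F]_(m,e)) (P' : 'M[F]_(n,d')) (Q' : 'M[F]_(m,e')) :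
  S *m A = A' *m R -> S *m B = B' *m R ->
  (forall x : 'cV[F]_n, (exists z : 'cV[F]_n, B *m x = A *m z) <-> (exists y : 'cV[F]_d, x = P *m y)) ->
  (forall v : 'cV[F]_m, (exists z : 'cV[F]_n, v = A *m z) <-> (exists y : 'cV[F]_e, v = Q *m y)) ->
  (forall x : 'cV[F]_n, (exists z : 'cV[F]_n, B' *m x = A' *m z) <-> (exists y : 'cV[F]_d', x = P' *m y)) ->
  (forall v : 'cV[F]_m, (exists z : 'cV[F]_n, v = A' *m z) <-> (exists y : 'cV[F]_e', v = Q' *m y)) ->
  (exists T, S *m Q = Q' *m T) /\ (exists T', R *m P = P' *m T').
Proof.
move=> hSA hSB hU hV hU' hV'; split.
- apply: colspan => y.
  have [z hz] : exists z, Q *m y = A *m z by apply/hV; exists y.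
  apply/hV'; exists (R *m z).
  by rewrite -mulmxA hz mulmxA hSA mulmxA.
- apply: colspan => y.
  have [z hz] : exists z, B *m (P *m y) = A *m z by apply/hU; exists y.
  apply/hU'; exists (R *m z).
  by rewrite -!mulmxA mulmxA -hSB -mulmxA hz mulmxA hSA -mulmxA.
Qed.

Lemma left_inv_id k l (L : 'M[F]_(k,l)) (X : 'M[F]_(l,k)) (M : 'M[F]_l) :
  X *m L = 1%:M -> L *m M = L -> M = 1%:M.
Proof. by move=> hXL hLM; rewrite -[M]mul1mx -hXL -mulmxA hLM. Qed.

Lemma dim_eq k l (X : 'M[F]_(k,l)) (Y : 'M[F]_(l,k)) :
  X *m Y = 1%:M -> Y *m X = 1%:M -> k = l.
Proof.
move=> h1 h2; apply/eqP; rewrite eqn_leq.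
have := mxrankM_maxl X Y; rewrite h1 mxrank1 => h3.
have := mxrankM_maxl Y X; rewrite h2 mxrank1 => h4.
by rewrite (leq_trans h3 (rank_leq_col _)) (leq_trans h4 (rank_leq_col _)).
Qed.

Lemma red_equiv (p p2 q q2 : mxpair F) :
  RedP p p2 -> RedP q q2 -> pair_equiv p q -> pair_equiv p2 q2.
Proof.
case: p => m n A B; case: q => m' n' A' B'; case: p2 => e d A2 B2; case: q2 => e' d' A2' B2'.
rewrite /RedP /pair_equiv /=.
move=> [P [Q [LP [LQ [hP hQ hU hV [hA hB]]]]]] [P' [Q' [LP' [LQ' [hP' hQ' hU' hV' [hA' hB']]]]]].
move=> [em [en [S [R [Su Ru hSA hSB]]]]].
subst m' n'; rewrite !castmx_id in hSA hSB.
have hSA' : invmx S *m A' = A *m invmx R.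
  by rewrite -[A'](mulmxK Ru) -hSA !mulmxA mulVmx // mul1mx.
have hSB' : invmx S *m B' = B *m invmx R.
  by rewrite -[B'](mulmxK Ru) -hSB !mulmxA mulVmx // mul1mx.
have [[T hT] [T' hT']] := transport hSA hSB hU hV hU' hV'.
have [[T2 hT2] [T2' hT2']] := transport hSA' hSB' hU' hV' hU hV.
have e1 : T2 *m T = 1%:M.
  by apply: (left_inv_id hQ); rewrite mulmxA -hT2 -mulmxA -hT mulmxA mulVmx // mul1mx.
have e2 : T *m T2 = 1%:M.
  by apply: (left_inv_id hQ'); rewrite mulmxA -hT -mulmxA -hT2 mulmxA mulmxV // mul1mx.
have f1 : T2' *m T' = 1%:M.
  by apply: (left_inv_id hP); rewrite mulmxA -hT2' -mulmxA -hT' mulmxA mulVmx // mul1mx.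
have f2 : T' *m T2' = 1%:M.
  by apply: (left_inv_id hP'); rewrite mulmxA -hT' -mulmxA -hT2' mulmxA mulmxV // mul1mx.
have ee := dim_eq e2 e1; have dd := dim_eq f2 f1.
subst e' d'.
exists erefl, erefl, T, T'; rewrite !castmx_id; split.
- by case: (mulmx1_unit e2).
- by case: (mulmx1_unit f2).
- have : Q' *m (T *m A2) = Q' *m (A2' *m T').
    by rewrite mulmxA -hT -mulmxA -hA mulmxA hSA -mulmxA hT' mulmxA hA' -mulmxA.
  by move/(congr1 (mulmx LQ')); rewrite !mulmxA hQ' !mul1mx.
- have : Q' *m (T *m B2) = Q' *m (B2' *m T').
    by rewrite mulmxA -hT -mulmxA -hB mulmxA hSB -mulmxA hT' mulmxA hB' -mulmxA.
  by move/(congr1 (mulmx LQ')); rewrite !mulmxA hQ' !mul1mx.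
Qed.

End Inv.



Section Fin.
Variable F : fieldType.

Definition surj m n (B : 'M[F]_(m,n)) := forall v : 'cV[F]_m, exists x : 'cV[F]_n, v = B *m x.

Lemma surj_equiv (p q : mxpair F) : pair_equiv p q -> surj (pr_B p) -> surj (pr_B q).
Proof.
case: p => m n A B; case: q => m' n' A' B'; rewrite /pair_equiv /=.
move=> [em [en [S [R [Su Ru hSA hSB]]]]]; subst m' n'; rewrite !castmx_id in hSA hSB.
move=> hs v; have [x hx] := hs (invmx S *m v).
by exists (R *m x); rewrite mulmxA -hSB -mulmxA -hx mulmxA mulmxV // mul1mx.
Qed.

Lemma surj_block m n m' n' (B : 'M[F]_(m,n)) (B' : 'M[F]_(m',n')) :
  surj (block_mx B 0 0 B') -> surj B /\ surj B'.
Proof.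
move=> hs; split => v.
- have [x hx] := hs (col_mx v 0); have [x1 [x2 ex]] := cV_split x.
  move: hx; rewrite ex mul_block_col !mul0mx addr0 => /eq_col_mx [-> _]; by exists x1.
- have [x hx] := hs (col_mx 0 v); have [x1 [x2 ex]] := cV_split x.
  move: hx; rewrite ex mul_block_col !mul0mx add0r => /eq_col_mx [_ ->]; by exists x2.
Qed.

Lemma not_surj_RT k : (0 < k)%N -> ~ surj (Rmx F k)^T.
Proof.
case: k => // k _ hs; have [x hx] := hs (delta_mx 0 0).
have := congr1 (fun v : 'cV[F]_k.+1 => v 0 0) hx; rewrite !mxE /=.
rewrite big1; first by move/eqP; rewrite oner_eq0.
by move=> l _; rewrite !mxE mul0r.
Qed.

Lemma surj_noLRT r (D : 'M[F]_r) s : all (fun b => 0 < blk_size b)%N s ->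
  surj (pr_B (regpair D s)) -> noLRT s.
Proof.
elim/last_ind: s => [//|s b IH].
rewrite all_rcons /noLRT all_rcons => /andP [hb hall].
rewrite /regpair map_rcons foldl_rcons /= => /surj_block [/(IH hall) hs hsb].
move: hs; rewrite /noLRT => ->; rewrite andbT; case: b hb hsb => //= k hk hsb.
by case: (not_surj_RT hk).
Qed.

Lemma rank_red m n e d (A B : 'M[F]_(m,n)) (A2 B2 : 'M[F]_(e,d)) :
  Red A B A2 B2 -> \rank A = e.
Proof.
move=> [P [Q [LP [LQ [hP hQ hU hV [hA hB]]]]]].
have [M1 eA] : exists M, A = Q *m M.
  by apply: colspan => z; apply/hV; exists z.
have [M2 eQ] : exists M, Q = A *m M.
  by apply: colspan => y; apply/hV; exists y.
apply/eqP; rewrite eqn_leq {1}eA (leq_trans (mxrankM_maxl _ _) (rank_leq_col _)) /=.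
have := mxrankM_maxr LQ Q; rewrite hQ mxrank1 => h.
by rewrite (leq_trans h) // {1}eQ mxrankM_maxl.
Qed.

Lemma rank_red2 m n e d (A : 'M[F]_(m,n)) (A2 : 'M[F]_(e,d)) (P : 'M[F]_(n,d)) (Q : 'M[F]_(m,e)) (LQ : 'M[F]_(e,m)) :
  LQ *m Q = 1%:M -> A *m P = Q *m A2 -> \rank (A *m P) = \rank A2.
Proof.
move=> hQ ->; apply/eqP; rewrite eqn_leq mxrankM_maxr /=.
have := mxrankM_maxr LQ (Q *m A2); by rewrite mulmxA hQ mul1mx.
Qed.

Lemma rank_equiv (p q : mxpair F) : pair_equiv p q -> \rank (pr_A p) = \rank (pr_A q).
Proof.
case: p => m n A B; case: q => m' n' A' B'; rewrite /pair_equiv /=.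
move=> [em [en [S [R [Su Ru hSA hSB]]]]]; subst m' n'; rewrite !castmx_id in hSA hSB.
have h1 : \rank (S *m A) = \rank A.
  apply/eqP; rewrite eqn_leq mxrankM_maxr /=.
  have := mxrankM_maxr (invmx S) (S *m A); by rewrite mulmxA mulVmx // mul1mx.
by rewrite -h1 hSA mxrankMfree // row_free_unit.
Qed.

Definition bm (b : blk) : nat := match b with BLR k => k.-1 | BIJ k | BJI k | BLRT k => k end.

Lemma prm_reg r (D : 'M[F]_r) s : pr_m (regpair D s) = (r + sumn (map bm s))%N.
Proof.
elim/last_ind: s => [|s b IH]; first by rewrite /= addn0.
rewrite /regpair map_rcons foldl_rcons /= -/(regpair D s) IH map_rcons -cats1 sumn_cat /= addn0 addnA.
by case: b.
Qed.

End Fin.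

Lemma shift_cat s t : shift_blks (s ++ t) = shift_blks s ++ shift_blks t.
Proof. by rewrite /shift_blks map_cat flatten_cat. Qed.

Lemma blk_id b : (is_J1I1 b + 2 * sumn (map bm (shift_blk b)) =
   sumn (map bm [:: b]) + sumn (map bm (shift_blks (shift_blk b))))%N.
Proof.
case: b => k /=; rewrite ?addn0 ?add0n ?muln0 //; try lia.
case: k => [|[|[|k]]] //=; lia.
Qed.

Lemma count_id s : (count is_J1I1 s + 2 * sumn (map bm (shift_blks s)) =
   sumn (map bm s) + sumn (map bm (shift_blks (shift_blks s))))%N.
Proof.
elim: s => [//|b s IH].
have -> : shift_blks (b :: s) = shift_blk b ++ shift_blks s by [].
rewrite shift_cat !map_cat !sumn_cat /=.
have := blk_id b; rewrite /= addn0; lia.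
Qed.

Unset Implicit Arguments. Set Strict Implicit.

Theorem lemma2 (F : fieldType) (m n : nat) (A1 B1 : 'M[F]_(m, n))
    (d2 e2 : nat) (P : 'M[F]_(n, d2)) (Q : 'M[F]_(m, e2))
    (A2 B2 : 'M[F]_(e2, d2)) (r : nat) (D : 'M[F]_r) (s : seq blk) :
  (forall v : 'cV[F]_m, exists x : 'cV[F]_n, v = B1 *m x) ->
  \rank P = d2 ->
  (forall x : 'cV[F]_n,
      (exists z : 'cV[F]_n, B1 *m x = A1 *m z) <-> (exists y : 'cV[F]_d2, x = P *m y)) ->
  \rank Q = e2 ->
  (forall v : 'cV[F]_m,
      (exists z : 'cV[F]_n, v = A1 *m z) <-> (exists y : 'cV[F]_e2, v = Q *m y)) ->
  A1 *m P = Q *m A2 -> B1 *m P = Q *m B2 ->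
  reg_decomp (MxPair A1 B1) D s ->
  reg_decomp (MxPair A2 B2) D (shift_blks s) /\
  ((count is_J1I1 s)%:Z = m%:Z - 2 * (\rank A1)%:Z + (\rank (A1 *m P))%:Z).
Proof.
move=> hsurj hrP hU hrQ hV hA hB [Du Hall Heq].
have [LP hLP] : exists LP : 'M[F]_(d2, n), LP *m P = 1%:M.
  have : row_free P^T by rewrite /row_free mxrank_tr hrP.
  case/row_freeP => X hX; exists X^T.
  by rewrite -(trmxK P) -trmx_mul hX trmx1.
have [LQ hLQ] : exists LQ : 'M[F]_(e2, m), LQ *m Q = 1%:M.
  have : row_free Q^T by rewrite /row_free mxrank_tr hrQ.
  case/row_freeP => X hX; exists X^T.
  by rewrite -(trmxK Q) -trmx_mul hX trmx1.
have hR : Red A1 B1 A2 B2.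
  by exists P, Q, LP, LQ; split.
have hnl : noLRT s := surj_noLRT Hall (surj_equiv Heq hsurj).
have heq2 := red_equiv (p := MxPair A1 B1) (p2 := MxPair A2 B2) hR (red_can D hnl) Heq.
have hall2 : all (fun b => 0 < blk_size b)%N (shift_blks s).
  elim: s {hnl Heq heq2} Hall => [//|b s IH] /= /andP [hb hs].
  have -> : shift_blks (b :: s) = shift_blk b ++ shift_blks s by [].
  rewrite all_cat IH // andbT.
  case: b hb => k //= hk; rewrite ?hk //; case: ifP => // hk1 /=; rewrite andbT; by case: k hk hk1 => [|[|k]].
split; first by split.
have hnl2 : noLRT (shift_blks s).
  elim: s {Hall Heq heq2 hall2} hnl => [//|b s IH] /= /andP [hb hs].
  have -> : shift_blks (b :: s) = shift_blk b ++ shift_blks s by [].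
  move: (IH hs); rewrite /noLRT all_cat => ->; rewrite andbT.
  by case: b hb => k //=; case: ifP.
have r1 := rank_red hR.
have r2 := rank_red2 hLQ hA.
have r3 := rank_equiv heq2.
have r4 := rank_red (red_can D hnl2).
rewrite r1 r2 r3 r4 /=.
move: Heq heq2 => [em _] [ee _]; rewrite /= in em ee.
rewrite em ee !prm_reg.
have := count_id s; lia.
Qed.
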